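(* The sequence $$\left\{1-\frac{1}{\log(n+2)}\log\left(\frac{(n+2)\log(n+2)-\log4}{n}\right)\right\}_{n\in\mathbb{N}}$$ is strictly increasing.
   Context: $\mathbb{N}=\{1,2,3,\dots\}$. *)

(* Defs.v *)
From Stdlib Require Import Reals.
Open Scope R_scope.

Definition seq8p2 (n : nat) : R :=
  1 - / ln (INR n + 2) * ln (((INR n + 2) * ln (INR n + 2) - ln 4) / INR n).

(* Main.v *)
Require Import Defs.
From Stdlib Require Import Reals.
From Coquelicot Require Import Coquelicot.
From Stdlib Require Import Lra Psatz.
Open Scope R_scope.

Definition FF (t L c : R) : R := 8*c - 4*c^2 - 8*t*c + 2*t*c^2 - 12*t*L + 8*t*L*c + t*L*c^2 - 4*t*L^2 - 2*t*L^2*c + 2*t^2*c + 12*t^2*L - 4*t^2*L*c - t^2*L^2*c + 2*t^2*L^3 - 3*t^3*L + t^3*L^2.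
Definition P4 (u w e : R) : R :=
  (98304/125)
  + (765952/25)*e
  + (161792/5)*e^2
  + (6144)*e^3
  + (165888/25)*w
  + (60416/5)*w*e
  + (3328)*w*e^2
  + (5376/5)*w^2
  + (576)*w^2*e
  + (32)*w^3
  + (503808/125)*u
  + (1288704/25)*u*e
  + (214784/5)*u*e^2
  + (5888)*u*e^3
  + (242688/25)*u*w
  + (69376/5)*u*w*e
  + (2688)*u*w*e^2
  + (5216/5)*u*w^2
  + (376)*u*w^2*e
  + (16)*u*w^3
  + (605184/125)*u^2
  + (840512/25)*u^2*e
  + (109472/5)*u^2*e^2
  + (2144)*u^2*e^3
  + (129952/25)*u^2*w
  + (28624/5)*u^2*w*e
  + (772)*u^2*w*e^2
  + (1648/5)*u^2*w^2
  + (78)*u^2*w^2*e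
  + (2)*u^2*w^3
  + (300352/125)*u^3
  + (268376/25)*u^3*e
  + (27396/5)*u^3*e^2
  + (372)*u^3*e^3
  + (30968/25)*u^3*w
  + (5236/5)*u^3*w*e
  + (93)*u^3*w*e^2
  + (38)*u^3*w^2
  + (5)*u^3*w^2*e
  + (67256/125)*u^4
  + (43368/25)*u^4*e
  + (3518/5)*u^4*e^2
  + (31)*u^4*e^3
  + (3104/25)*u^4*w
  + (408/5)*u^4*w*e
  + (4)*u^4*w*e^2
  + (1)*u^4*w^2
  + (5916/125)*u^5
  + (3258/25)*u^5*e
  + (218/5)*u^5*e^2
  + (1)*u^5*e^3
  + (17/5)*u^5*w
  + (2)*u^5*w*e
  + (16/25)*u^6
  + (17/5)*u^6*e
  + (1)*u^6*e^2.
Definition P3 (u w e : R) : R :=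
  (150)
  + (365/2)*e
  + (175/4)*e^2
  + (723)*w
  + (405)*w*e
  + (75/2)*w*e^2
  + (255)*w^2
  + (60)*w^2*e
  + (18)*w^3
  + (2684/5)*u
  + (660)*u*e
  + (155)*u*e^2
  + (8531/5)*u*w
  + (849)*u*w*e
  + (65)*u*w*e^2
  + (1922/5)*u*w^2
  + (62)*u*w^2*e
  + (12)*u*w^3
  + (17978/25)*u^2
  + (9057/10)*u^2*e
  + (827/4)*u^2*e^2
  + (35154/25)*u^2*w
  + (3038/5)*u^2*w*e
  + (34)*u^2*w*e^2
  + (176)*u^2*w^2
  + (20)*u^2*w^2*e
  + (2)*u^2*w^3
  + (10888/25)*u^3
  + (2916/5)*u^3*e
  + (128)*u^3*e^2
  + (12202/25)*u^3*w
  + (934/5)*u^3*w*e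
  + (7)*u^3*w*e^2
  + (142/5)*u^3*w^2
  + (2)*u^3*w^2*e
  + (2746/25)*u^4
  + (1779/10)*u^4*e
  + (149/4)*u^4*e^2
  + (1683/25)*u^4*w
  + (121/5)*u^4*w*e
  + (1/2)*u^4*w*e^2
  + (1)*u^4*w^2
  + (28/5)*u^5
  + (24)*u^5*e
  + (5)*u^5*e^2
  + (11/5)*u^5*w
  + (1)*u^5*w*e
  + (-26/25)*u^6
  + (11/10)*u^6*e
  + (1/4)*u^6*e^2.

Lemma P4_id t L c : FF t L c * (t+4)^3 = P4 (t-4) ((L-c)*(t+4) - 2*(t-4)) (c - 6/5).
Proof. unfold FF, P4. field. Qed.
Lemma P3_id t L c : FF t L c * (t+2)^3 = P3 (t-3) ((L-c/2)*(t+2) - 2*(t-2)) (c - 6/5).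
Proof. unfold FF, P3. field. Qed.
Lemma P4_pos u w e : 0 <= u -> 0 <= w -> 0 <= e -> 0 < P4 u w e.
Proof. intros. unfold P4.
  assert (0 <= e) by (repeat apply Rmult_le_pos; try apply pow_le; lra).
  assert (0 <= e^2) by (repeat apply Rmult_le_pos; try apply pow_le; lra).
  assert (0 <= e^3) by (repeat apply Rmult_le_pos; try apply pow_le; lra).
  assert (0 <= w) by (repeat apply Rmult_le_pos; try apply pow_le; lra).
  assert (0 <= w*e) by (repeat apply Rmult_le_pos; try apply pow_le; lra).
  assert (0 <= w*e^2) by (repeat apply Rmult_le_pos; try apply pow_le; lra).
  assert (0 <= w^2) by (repeat apply Rmult_le_pos; try apply pow_le; lra).
  assert (0 <= w^2*e) by (repeat apply Rmult_le_pos; try apply pow_le; lra).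
  assert (0 <= w^3) by (repeat apply Rmult_le_pos; try apply pow_le; lra).
  assert (0 <= u) by (repeat apply Rmult_le_pos; try apply pow_le; lra).
  assert (0 <= u*e) by (repeat apply Rmult_le_pos; try apply pow_le; lra).
  assert (0 <= u*e^2) by (repeat apply Rmult_le_pos; try apply pow_le; lra).
  assert (0 <= u*e^3) by (repeat apply Rmult_le_pos; try apply pow_le; lra).
  assert (0 <= u*w) by (repeat apply Rmult_le_pos; try apply pow_le; lra).
  assert (0 <= u*w*e) by (repeat apply Rmult_le_pos; try apply pow_le; lra).
  assert (0 <= u*w*e^2) by (repeat apply Rmult_le_pos; try apply pow_le; lra).
  assert (0 <= u*w^2) by (repeat apply Rmult_le_pos; try apply pow_le; lra).
  assert (0 <= u*w^2*e) by (repeat apply Rmult_le_pos; try apply pow_le; lra).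
  assert (0 <= u*w^3) by (repeat apply Rmult_le_pos; try apply pow_le; lra).
  assert (0 <= u^2) by (repeat apply Rmult_le_pos; try apply pow_le; lra).
  assert (0 <= u^2*e) by (repeat apply Rmult_le_pos; try apply pow_le; lra).
  assert (0 <= u^2*e^2) by (repeat apply Rmult_le_pos; try apply pow_le; lra).
  assert (0 <= u^2*e^3) by (repeat apply Rmult_le_pos; try apply pow_le; lra).
  assert (0 <= u^2*w) by (repeat apply Rmult_le_pos; try apply pow_le; lra).
  assert (0 <= u^2*w*e) by (repeat apply Rmult_le_pos; try apply pow_le; lra).
  assert (0 <= u^2*w*e^2) by (repeat apply Rmult_le_pos; try apply pow_le; lra).
  assert (0 <= u^2*w^2) by (repeat apply Rmult_le_pos; try apply pow_le; lra).
  assert (0 <= u^2*w^2*e) by (repeat apply Rmult_le_pos; try apply pow_le; lra).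
  assert (0 <= u^2*w^3) by (repeat apply Rmult_le_pos; try apply pow_le; lra).
  assert (0 <= u^3) by (repeat apply Rmult_le_pos; try apply pow_le; lra).
  assert (0 <= u^3*e) by (repeat apply Rmult_le_pos; try apply pow_le; lra).
  assert (0 <= u^3*e^2) by (repeat apply Rmult_le_pos; try apply pow_le; lra).
  assert (0 <= u^3*e^3) by (repeat apply Rmult_le_pos; try apply pow_le; lra).
  assert (0 <= u^3*w) by (repeat apply Rmult_le_pos; try apply pow_le; lra).
  assert (0 <= u^3*w*e) by (repeat apply Rmult_le_pos; try apply pow_le; lra).
  assert (0 <= u^3*w*e^2) by (repeat apply Rmult_le_pos; try apply pow_le; lra).
  assert (0 <= u^3*w^2) by (repeat apply Rmult_le_pos; try apply pow_le; lra).
  assert (0 <= u^3*w^2*e) by (repeat apply Rmult_le_pos; try apply pow_le; lra).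
  assert (0 <= u^4) by (repeat apply Rmult_le_pos; try apply pow_le; lra).
  assert (0 <= u^4*e) by (repeat apply Rmult_le_pos; try apply pow_le; lra).
  assert (0 <= u^4*e^2) by (repeat apply Rmult_le_pos; try apply pow_le; lra).
  assert (0 <= u^4*e^3) by (repeat apply Rmult_le_pos; try apply pow_le; lra).
  assert (0 <= u^4*w) by (repeat apply Rmult_le_pos; try apply pow_le; lra).
  assert (0 <= u^4*w*e) by (repeat apply Rmult_le_pos; try apply pow_le; lra).
  assert (0 <= u^4*w*e^2) by (repeat apply Rmult_le_pos; try apply pow_le; lra).
  assert (0 <= u^4*w^2) by (repeat apply Rmult_le_pos; try apply pow_le; lra).
  assert (0 <= u^5) by (repeat apply Rmult_le_pos; try apply pow_le; lra).
  assert (0 <= u^5*e) by (repeat apply Rmult_le_pos; try apply pow_le; lra).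
  assert (0 <= u^5*e^2) by (repeat apply Rmult_le_pos; try apply pow_le; lra).
  assert (0 <= u^5*e^3) by (repeat apply Rmult_le_pos; try apply pow_le; lra).
  assert (0 <= u^5*w) by (repeat apply Rmult_le_pos; try apply pow_le; lra).
  assert (0 <= u^5*w*e) by (repeat apply Rmult_le_pos; try apply pow_le; lra).
  assert (0 <= u^6) by (repeat apply Rmult_le_pos; try apply pow_le; lra).
  assert (0 <= u^6*e) by (repeat apply Rmult_le_pos; try apply pow_le; lra).
  assert (0 <= u^6*e^2) by (repeat apply Rmult_le_pos; try apply pow_le; lra).
  lra. Qed.
Lemma P3_pos u w e : 0 <= u -> u <= 1 -> 0 <= w -> 0 <= e -> 0 < P3 u w e.
Proof. intros. unfold P3.
  assert (0 <= e) by (repeat apply Rmult_le_pos; try apply pow_le; lra).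
  assert (0 <= e^2) by (repeat apply Rmult_le_pos; try apply pow_le; lra).
  assert (0 <= w) by (repeat apply Rmult_le_pos; try apply pow_le; lra).
  assert (0 <= w*e) by (repeat apply Rmult_le_pos; try apply pow_le; lra).
  assert (0 <= w*e^2) by (repeat apply Rmult_le_pos; try apply pow_le; lra).
  assert (0 <= w^2) by (repeat apply Rmult_le_pos; try apply pow_le; lra).
  assert (0 <= w^2*e) by (repeat apply Rmult_le_pos; try apply pow_le; lra).
  assert (0 <= w^3) by (repeat apply Rmult_le_pos; try apply pow_le; lra).
  assert (0 <= u) by (repeat apply Rmult_le_pos; try apply pow_le; lra).
  assert (0 <= u*e) by (repeat apply Rmult_le_pos; try apply pow_le; lra).
  assert (0 <= u*e^2) by (repeat apply Rmult_le_pos; try apply pow_le; lra).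
  assert (0 <= u*w) by (repeat apply Rmult_le_pos; try apply pow_le; lra).
  assert (0 <= u*w*e) by (repeat apply Rmult_le_pos; try apply pow_le; lra).
  assert (0 <= u*w*e^2) by (repeat apply Rmult_le_pos; try apply pow_le; lra).
  assert (0 <= u*w^2) by (repeat apply Rmult_le_pos; try apply pow_le; lra).
  assert (0 <= u*w^2*e) by (repeat apply Rmult_le_pos; try apply pow_le; lra).
  assert (0 <= u*w^3) by (repeat apply Rmult_le_pos; try apply pow_le; lra).
  assert (0 <= u^2) by (repeat apply Rmult_le_pos; try apply pow_le; lra).
  assert (0 <= u^2*e) by (repeat apply Rmult_le_pos; try apply pow_le; lra).
  assert (0 <= u^2*e^2) by (repeat apply Rmult_le_pos; try apply pow_le; lra).
  assert (0 <= u^2*w) by (repeat apply Rmult_le_pos; try apply pow_le; lra).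
  assert (0 <= u^2*w*e) by (repeat apply Rmult_le_pos; try apply pow_le; lra).
  assert (0 <= u^2*w*e^2) by (repeat apply Rmult_le_pos; try apply pow_le; lra).
  assert (0 <= u^2*w^2) by (repeat apply Rmult_le_pos; try apply pow_le; lra).
  assert (0 <= u^2*w^2*e) by (repeat apply Rmult_le_pos; try apply pow_le; lra).
  assert (0 <= u^2*w^3) by (repeat apply Rmult_le_pos; try apply pow_le; lra).
  assert (0 <= u^3) by (repeat apply Rmult_le_pos; try apply pow_le; lra).
  assert (0 <= u^3*e) by (repeat apply Rmult_le_pos; try apply pow_le; lra).
  assert (0 <= u^3*e^2) by (repeat apply Rmult_le_pos; try apply pow_le; lra).
  assert (0 <= u^3*w) by (repeat apply Rmult_le_pos; try apply pow_le; lra).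
  assert (0 <= u^3*w*e) by (repeat apply Rmult_le_pos; try apply pow_le; lra).
  assert (0 <= u^3*w*e^2) by (repeat apply Rmult_le_pos; try apply pow_le; lra).
  assert (0 <= u^3*w^2) by (repeat apply Rmult_le_pos; try apply pow_le; lra).
  assert (0 <= u^3*w^2*e) by (repeat apply Rmult_le_pos; try apply pow_le; lra).
  assert (0 <= u^4) by (repeat apply Rmult_le_pos; try apply pow_le; lra).
  assert (0 <= u^4*e) by (repeat apply Rmult_le_pos; try apply pow_le; lra).
  assert (0 <= u^4*e^2) by (repeat apply Rmult_le_pos; try apply pow_le; lra).
  assert (0 <= u^4*w) by (repeat apply Rmult_le_pos; try apply pow_le; lra).
  assert (0 <= u^4*w*e) by (repeat apply Rmult_le_pos; try apply pow_le; lra).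
  assert (0 <= u^4*w*e^2) by (repeat apply Rmult_le_pos; try apply pow_le; lra).
  assert (0 <= u^4*w^2) by (repeat apply Rmult_le_pos; try apply pow_le; lra).
  assert (0 <= u^5) by (repeat apply Rmult_le_pos; try apply pow_le; lra).
  assert (0 <= u^5*e) by (repeat apply Rmult_le_pos; try apply pow_le; lra).
  assert (0 <= u^5*e^2) by (repeat apply Rmult_le_pos; try apply pow_le; lra).
  assert (0 <= u^5*w) by (repeat apply Rmult_le_pos; try apply pow_le; lra).
  assert (0 <= u^5*w*e) by (repeat apply Rmult_le_pos; try apply pow_le; lra).
  assert (0 <= u^6) by (repeat apply Rmult_le_pos; try apply pow_le; lra).
  assert (0 <= u^6*e) by (repeat apply Rmult_le_pos; try apply pow_le; lra).
  assert (0 <= u^6*e^2) by (repeat apply Rmult_le_pos; try apply pow_le; lra).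
  assert (u^6 <= 1) by (rewrite <- (pow1 6); apply pow_incr; lra).
  lra. Qed.

Definition gR (x : R) : R :=
  1 - / ln (x + 2) * ln (((x + 2) * ln (x + 2) - ln 4) / x).
Definition dg (x : R) : R :=
  (ln (((x + 2) * ln (x + 2) - ln 4) / x) / (x+2) - ln (x+2) * ((x - 2*ln (x+2) + ln 4)/(x*((x+2)*ln (x+2) - ln 4)))) / (ln (x+2))^2.
Lemma ln_lb y : 1 <= y -> 2*(y-1)/(y+1) <= ln y.
Proof.
  intros Hy. destruct (Req_dec y 1) as [->|Hne].
  { rewrite ln_1. lra. }
  destruct (MVT_gen (fun z => ln z - 2*(z-1)/(z+1)) 1 y (fun z => 1/z - 4/(z+1)^2)) as [c [Hc Heq]].
  - intros z Hz. rewrite Rmin_left in Hz by lra. rewrite Rmax_right in Hz by lra.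
    auto_derive. lra. field. lra.
  - intros z Hz. rewrite Rmin_left in Hz by lra. rewrite Rmax_right in Hz by lra.
    apply continuity_pt_filterlim. apply (ex_derive_continuous (fun z => ln z - 2*(z-1)/(z+1)) z). auto_derive. lra.
  - rewrite Rmin_left in Hc by lra. rewrite Rmax_right in Hc by lra.
    rewrite ln_1 in Heq.
    assert (0 <= 1/c - 4/(c+1)^2).
    { replace (1/c - 4/(c+1)^2) with ((c-1)^2/(c*(c+1)^2)) by (field; lra).
      apply Rdiv_le_0_compat. nra. apply Rmult_lt_0_compat; nra. }
    nra.
Qed.


Lemma my_ln_pos x : 1 < x -> 0 < ln x.
Proof. intros. rewrite <- ln_1. apply ln_increasing; lra. Qed.
Lemma my_ln_le x y : 0 < x -> x <= y -> ln x <= ln y.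
Proof. intros. destruct (Req_dec x y) as [->|]. lra. left. apply ln_increasing; lra. Qed.

Lemma dg_ok x : 1 <= x -> is_derive gR x (dg x).
Proof.
  intros Hx.
  assert (HL : 0 < ln (x+2)) by (apply my_ln_pos; lra).
  assert (Hc : 6/5 <= ln 4) by (pose proof (ln_lb 4 ltac:(lra)) as Hq; replace (2*(4-1)/(4+1)) with (6/5) in Hq by field; lra).
  assert (Hc4 : ln 2 <= ln (x+2)) by (apply my_ln_le; lra).
  assert (H2p : 0 < ln 2) by (apply my_ln_pos; lra).
  assert (Hc2 : ln 4 = 2 * ln 2).
  { replace 4 with (2*2) by lra. rewrite ln_mult by lra. lra. }
  assert (HA : 0 < (x+2) * ln (x+2) - ln 4) by (rewrite Hc2; nra).
  unfold gR. auto_derive.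
  - repeat split; try lra. apply Rmult_lt_0_compat. lra. apply Rinv_0_lt_compat; lra.
  - unfold dg. set (Lt := ln (x+2)) in *. set (c4 := ln 4) in *.
    set (lf := ln (((x + 2) * Lt - c4) / x)).
    change (ln (((x + 2) * Lt + - c4) * / x)) with lf.
    field. repeat split; lra.
Qed.

Lemma num_pos (x L c l : R) : 1 <= x -> 0 < L -> 0 < (x+2)*L - c -> (x+2)*L - c >= x ->
  0 < FF (x+2) L c -> 2*(((x+2)*L-c)/x - 1)/(((x+2)*L-c)/x + 1) <= l ->
  0 < l/(x+2) - L*((x - 2*L + c)/(x*((x+2)*L - c))).
Proof.
  intros Hx HL HA HAx HF Hl.
  set (A := (x+2)*L - c) in *.
  assert (E1 : 2*(A/x - 1)/(A/x + 1) = 2*(A-x)/(A+x)) by (field; lra).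
  rewrite E1 in Hl.
  assert (H1 : l * (x*A) >= 2*(A-x)/(A+x) * (x*A)).
  { apply Rle_ge, Rmult_le_compat_r; [nra|lra]. }
  assert (H2 : 2*(A-x)/(A+x)*(x*A) - (x+2)*L*(x-2*L+c) = FF (x+2) L c / (A+x)).
  { unfold FF, A. field. unfold A in HA. lra. }
  assert (H3 : 0 < FF (x+2) L c / (A+x)) by (apply Rdiv_lt_0_compat; lra).
  replace (l/(x+2) - L*((x - 2*L + c)/(x*A))) with ((l*(x*A) - (x+2)*L*(x-2*L+c)) / ((x+2)*(x*A)))
    by (field; lra).
  apply Rdiv_lt_0_compat.
  - lra.
  - apply Rmult_lt_0_compat; [lra|]. apply Rmult_lt_0_compat; lra.
Qed.

Lemma dg_pos x : 1 <= x -> dg x > 0.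
Proof.
  intros Hx.
  set (L := ln (x+2)). set (c := ln 4).
  assert (HL : 0 < L) by (apply my_ln_pos; lra).
  assert (Hc : 6/5 <= c) by (pose proof (ln_lb 4 ltac:(lra)) as Hq; replace (2*(4-1)/(4+1)) with (6/5) in Hq by field; unfold c; lra).
  assert (Hc2 : c = 2 * ln 2).
  { unfold c. replace 4 with (2*2) by lra. rewrite ln_mult by lra. lra. }
  assert (Hmain : 0 < (x+2)*L - c /\ (x+2)*L - c >= x /\ 0 < FF (x+2) L c).
  { destruct (Rle_lt_dec 2 x) as [H2|H2].
    - assert (EL : L = c + ln ((x+2)/4)).
      { unfold L, c. rewrite <- ln_mult by lra. f_equal. field. }
      pose proof (ln_lb ((x+2)/4)) as Hb.
      assert (Hw : (L - c)*((x+2)+4) - 2*((x+2)-4) >= 0).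
      { assert (Hb' : 2 * ((x + 2) / 4 - 1) / ((x + 2) / 4 + 1) <= L - c) by (replace (L - c) with (ln ((x+2)/4)) by lra; apply Hb; lra).
        replace (2 * ((x + 2) / 4 - 1) / ((x + 2) / 4 + 1)) with (2*(x-2)/(x+6)) in Hb' by (field; lra).
        apply Rle_ge. apply (Rmult_le_compat_r (x+6)) in Hb'; [|lra].
        replace (2*(x-2)/(x+6)*(x+6)) with (2*(x-2)) in Hb' by (field; lra). nra. }
      assert (HLc : L >= c) by nra.
      split; [nra|split; [nra|]].
      pose proof (P4_id (x+2) L c) as Id.
      pose proof (P4_pos ((x+2)-4) ((L - c)*((x+2)+4) - 2*((x+2)-4)) (c - 6/5)) as Pp.
      assert (0 < (x+2+4)^3) by (apply pow_lt; lra).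
      assert (0 < FF (x + 2) L c * (x + 2 + 4) ^ 3) by (rewrite Id; apply Pp; lra).
      nra.
    - assert (EL : L = ln 2 + ln ((x+2)/2)).
      { unfold L. rewrite <- ln_mult by lra. f_equal. field. }
      pose proof (ln_lb ((x+2)/2)) as Hb.
      assert (Hw : (L - c/2)*((x+2)+2) - 2*((x+2)-2) >= 0).
      { assert (Hb' : 2 * ((x + 2) / 2 - 1) / ((x + 2) / 2 + 1) <= L - c/2) by (replace (L - c/2) with (ln ((x+2)/2)) by lra; apply Hb; lra).
        replace (2 * ((x + 2) / 2 - 1) / ((x + 2) / 2 + 1)) with (2*x/(x+4)) in Hb' by (field; lra).
        apply Rle_ge. apply (Rmult_le_compat_r (x+4)) in Hb'; [|lra].
        replace (2*x/(x+4)*(x+4)) with (2*x) in Hb' by (field; lra). nra. }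
      assert (HLc : L - c/2 >= 0) by nra.
      split; [nra|split; [nra|]].
      pose proof (P3_id (x+2) L c) as Id.
      pose proof (P3_pos ((x+2)-3) ((L - c/2)*((x+2)+2) - 2*((x+2)-2)) (c - 6/5)) as Pp.
      assert (0 < (x+2+2)^3) by (apply pow_lt; lra).
      assert (0 < FF (x + 2) L c * (x + 2 + 2) ^ 3) by (rewrite Id; apply Pp; lra).
      nra. }
  destruct Hmain as [HA [HAx HF]].
  unfold dg. fold L. fold c.
  apply Rdiv_lt_0_compat; [|apply pow_lt; lra].
  apply num_pos; try lra.
  apply ln_lb.
  apply (Rmult_le_reg_r x); [lra|]. unfold Rdiv. rewrite Rmult_assoc, Rinv_l by lra. lra.
Qed.

Theorem lemma8p2 : forall m n : nat, (1 <= m)%nat -> (m < n)%nat -> seq8p2 m < seq8p2 n.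
Proof.
  intros m n Hm Hmn.
  change (gR (INR m) < gR (INR n)).
  apply le_INR in Hm. apply lt_INR in Hmn. simpl in Hm.
  apply (incr_function_le gR (Finite 1) p_infty dg).
  - intros x Hx _. apply dg_ok. exact Hx.
  - intros x Hx _. apply dg_pos. exact Hx.
  - simpl. exact Hm.
  - exact Hmn.
  - simpl. exact I.
Qed.
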